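(* Let $k$ be a field, $\mathsf{E}$ a left strictly locally finite $k$-linear category, and suppose a standard frontier $X_y$ has been chosen for every object $y$. Then for every object $y\in\mathsf{E}$ and every integer $n\ge1$, the degree $n$ standard frontier $X_y^{(n)}$ is a frontier for $y$.
   Context: A small $k$-linear category $\mathsf{E}$ has $k$-vector spaces $\operatorname{Hom}_\mathsf{E}(x,y)$, $k$-bilinear associative composition and identities with $\mathrm{id}_x\ne0$. Write $x\preceq y$ if there are $n\ge1$ and objects $x=z_0,\dots,z_n=y$ with $\operatorname{Hom}_\mathsf{E}(z_{i-1},z_i)\neq0$ for all $i$; $x\prec y$ means $x\preceq y$ and not $y\preceq x$. $\mathsf{E}$ is locally finite if all Hom spaces are finite-dimensional and every $\{z:x\preceq z\preceq y\}$ is finite. A finite set of objects $X$ with $x\prec y$ for all $x\in X$ is a frontier for $y$ if there is a finite set of objects $W$ such that every morphism $f:z\to y$ with $z\prec y$ and $z\notin W$ can be written $f=\sum_{i=1}^nh_ig_i$ ($n\ge0$) with $g_i:z\to x_i$, $h_i:x_i\to y$, $x_i\in X$. $\mathsf{E}$ is left strictly locally finite if it is locally finite and every object $y$ has a frontier with $W=\emptyset$; a chosen such frontier $X_y$ (for each $y$) is called the standard frontier of $y$. Define $X_y^{(1)}=X_y$ and $X_y^{(n+1)}=\bigcup_{z\in X_y^{(n)}}X_z$. *)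

(* Defs.v *)
From HB Require Import structures.
From mathcomp Require Import all_boot all_algebra.
From Stdlib Require List.

Set Implicit Arguments.
Unset Strict Implicit.
Unset Printing Implicit Defensive.

Import GRing.Theory.
Local Open Scope ring_scope.

Record klinCat (k : fieldType) := KLinCat {
  Obj : Type;
  Hom : Obj -> Obj -> lmodType k;
  comp : forall x y z : Obj, Hom y z -> Hom x y -> Hom x z;
  idm : forall x : Obj, Hom x x;
  comp_linear_r : forall (x y z : Obj) (h : Hom y z) (a : k) (g1 g2 : Hom x y),
      comp h (a *: g1 + g2) = a *: comp h g1 + comp h g2;
  comp_linear_l : forall (x y z : Obj) (g : Hom x y) (a : k) (h1 h2 : Hom y z),
      comp (a *: h1 + h2) g = a *: comp h1 g + comp h2 g;
  comp_assoc : forall (w x y z : Obj) (h : Hom y z) (g : Hom x y) (f : Hom w x),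
      comp h (comp g f) = comp (comp h g) f;
  comp_id_l : forall (x y : Obj) (f : Hom x y), comp (idm y) f = f;
  comp_id_r : forall (x y : Obj) (f : Hom x y), comp f (idm x) = f;
  idm_neq0 : forall x : Obj, idm x != 0
}.

Section Defs.
Variables (k : fieldType) (E : klinCat k).
Local Notation Obj := (Obj E).
Local Notation Hom := (@Hom k E).
Local Notation comp := (@comp k E _ _ _).

Definition nonzeroHom (x y : Obj) : Prop := exists f : Hom x y, f != 0.

Inductive preceq : Obj -> Obj -> Prop :=
  | preceq_step : forall x y, nonzeroHom x y -> preceq x y
  | preceq_cons : forall x y z, nonzeroHom x y -> preceq y z -> preceq x z.

Definition prec (x y : Obj) : Prop := preceq x y /\ ~ preceq y x.

Definition findim (V : lmodType k) : Prop :=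
  exists s : seq V, forall v : V,
    exists c : 'I_(size s) -> k, v = \sum_(i < size s) c i *: s`_i.

Definition locally_finite : Prop :=
  (forall x y : Obj, findim (Hom x y)) /\
  (forall x y : Obj, exists s : list Obj,
      forall z, preceq x z -> preceq z y -> List.In z s).

Definition frontier_with (y : Obj) (X W : list Obj) : Prop :=
  (forall x, List.In x X -> prec x y) /\
  (forall (z : Obj), prec z y -> ~ List.In z W ->
     forall f : Hom z y,
       exists l : seq {x : Obj & (Hom z x * Hom x y)%type},
         (forall p, List.In p l -> List.In (projT1 p) X) /\
         f = \sum_(p <- l) comp (projT2 p).2 (projT2 p).1).

Definition frontier (y : Obj) (X : list Obj) : Prop :=
  exists W : list Obj, frontier_with y X W.

(* degree n standard frontier: X^(1) = X y, X^(n+1) = union_{z in X^(n)} X z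
   (degree 0 is unused and set to the empty list) *)
Fixpoint std_frontier_deg (X : Obj -> list Obj) (y : Obj) (n : nat) : list Obj :=
  match n with
  | O => nil
  | S O => X y
  | S m => List.flat_map X (std_frontier_deg X y m)
  end.

End Defs.

(* Main.v *)
Require Import Defs.
From mathcomp Require Import all_boot all_algebra.
From Stdlib Require List.

Set Implicit Arguments.
Unset Strict Implicit.
Unset Printing Implicit Defensive.
Import GRing.Theory.
Local Open Scope ring_scope.

Section Aux.
Variables (k : fieldType) (E : klinCat k).
Local Notation Ob := (Defs.Obj E).
Local Notation Hm := (@Defs.Hom k E).
Local Notation cmp := (@Defs.comp k E _ _ _).

Lemma preceq_trans (x y z : Ob) : preceq x y -> preceq y z -> preceq x z.
Proof.
elim=> [a b Hab|a b c Hab _ IH] Hz; first exact: preceq_cons Hab Hz.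
exact: preceq_cons Hab (IH Hz).
Qed.

Lemma prec_trans (x y z : Ob) : prec x y -> prec y z -> prec x z.
Proof.
move=> [h1 h2] [h3 h4]; split; first exact: preceq_trans h1 h3.
move=> h5; apply: h2; exact: preceq_trans h3 h5.
Qed.

Lemma compD (x y z : Ob) (h : Hm y z) (a b : Hm x y) :
  cmp h (a + b) = cmp h a + cmp h b.
Proof. by have := comp_linear_r h 1 a b; rewrite !scale1r. Qed.

Lemma comp0 (x y z : Ob) (h : Hm y z) : cmp h (0 : Hm x y) = 0.
Proof.
have H := compD h (0 : Hm x y) 0.
rewrite [in LHS](addr0 (0 : Hm x y)) in H.
by apply: (addrI (cmp h 0)); rewrite -H addr0.
Qed.

Lemma comp_sum (w x y : Ob) (h : Hm x y) (I : Type) (l : seq I) (F : I -> Hm w x) :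
  cmp h (\sum_(i <- l) F i) = \sum_(i <- l) cmp h (F i).
Proof.
elim: l => [|a l IH]; first by rewrite !big_nil comp0.
by rewrite !big_cons compD IH.
Qed.

Lemma interval_list (Hl : locally_finite E) (L : list Ob) :
  exists Wl : list Ob, forall z u, List.In z L -> preceq z u -> preceq u z ->
    List.In u Wl.
Proof.
elim: L => [|a L [Wl IH]]; first by exists nil.
have [s Hs] := Hl.2 a a.
exists (s ++ Wl) => z u /= [<-|hz] h1 h2; apply/List.in_or_app.
  by left; apply: Hs.
by right; apply: IH hz h1 h2.
Qed.

End Aux.

Theorem lemma4p6 (k : fieldType) (E : klinCat k)
    (HLF : locally_finite E)
    (X : Obj E -> list (Obj E))
    (HX : forall y : Obj E, frontier_with y (X y) nil) :
  forall (y : Obj E) (n : nat), (1 <= n)%N -> frontier y (std_frontier_deg X y n).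
Proof.
move=> y [//|m] _.
elim: m => [|m [W [H1 H2]]]; first by exists nil; apply: HX.
set Xn := std_frontier_deg X y m.+1 in H1 H2 *.
have -> : std_frontier_deg X y m.+2 = List.flat_map X Xn by [].
have [Wl HWl] := interval_list HLF Xn.
exists (W ++ Wl); split.
  move=> x /List.in_flat_map [z [hz hx]].
  exact: prec_trans ((HX z).1 x hx) (H1 z hz).
move=> w hw hW f.
have hW1 : ~ List.In w W by move=> h; apply: hW; apply: List.in_or_app; left.
have hW2 : ~ List.In w Wl by move=> h; apply: hW; apply: List.in_or_app; right.
have [l [hl ->]] := H2 w hw hW1 f.
elim: l hl => [|p l IH] hl; first by exists nil; split => //; rewrite !big_nil.
rewrite big_cons.
have [l' [hl' ->]] : exists l' : seq {x : Obj E & (Defs.Hom w x * Defs.Hom x y)%type},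
    (forall q, List.In q l' -> List.In (projT1 q) (List.flat_map X Xn)) /\
    \sum_(q <- l) Defs.comp (projT2 q).2 (projT2 q).1 =
    \sum_(q <- l') Defs.comp (projT2 q).2 (projT2 q).1.
  by apply: IH => q hq; apply: hl; right.
have hz : List.In (projT1 p) Xn by apply: hl; left.
clear hl; case: p hz => z [g h] /= hz.
rewrite /=.
have [->|gn0] := eqVneq g 0.
  by exists l'; split => //; rewrite comp0 add0r.
have hwz : preceq w z by apply: preceq_step; exists g.
have pwz : prec w z.
  by split => // hzw; apply: hW2; apply: HWl hz hzw hwz.
have [lz [hlz ->]] := (HX z).2 w pwz (fun h => h) g.
exists ([seq existT (fun x => (Defs.Hom w x * Defs.Hom x y)%type) (projT1 q)
           ((projT2 q).1, Defs.comp h (projT2 q).2) | q <- lz] ++ l').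
split.
  move=> q hq; case: (List.in_app_or _ _ _ hq) => [hq1|hq1]; last exact: hl' hq1.
  case: (proj1 (List.in_map_iff _ _ _) hq1) => q0 [<- hq0] /=.
  by apply/List.in_flat_map; exists z; split => //; apply: hlz.
rewrite big_cat big_map /= comp_sum; congr (_ + _).
by apply: eq_bigr => q _ /=; apply: Defs.comp_assoc.
Qed.
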